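(* ($I\Sigma_1$) Let $n,k\in\mathbb{N}$. If a finite set $X\subseteq\mathbb{N}$ is $\omega^{n+6k}$-large and $\omega^3$-sparse, then $X$ admits an $(\omega^n,\omega^k)$-grouping for $\min X$ colors.
   Context: $\alpha$-largeness for $\alpha<\omega^\omega$: writing ordinals in Cantor normal form, $0[m]=0$, $(\beta+1)[m]=\beta$, $(\beta+\omega^n)[m]=\beta+\omega^{n-1}\cdot m$ for $n\ge1$; a finite $\{x_0<\dots<x_{\ell-1}\}$ is $\alpha$-large if $\alpha[x_0]\cdots[x_{\ell-1}]=0$. $X$ is \emph{$\alpha$-sparse} if $\min X>3$ and for all $x<y$ in $X$ the interval $[x,y)$ is $\alpha$-large. For $P:[X]^2\to\{0,\dots,\min X-1\}$, a finite sequence $\langle F_i\subseteq X: i<l\rangle$ of finite sets is an \emph{$(\alpha,\beta)$-grouping for $P$} if: $\max F_i<\min F_j$ for $i<j<l$; each $F_i$ is $\alpha$-large; $\{\max F_i: i<l\}$ is $\beta$-large; and for all $i<j<l$, $x,x'\in F_i$, $y,y'\in F_j$, $P(x,y)=P(x',y')$. $X$ \emph{admits an $(\alpha,\beta)$-grouping for $k$ colors} if every $P:[X]^2\to\{0,\dots,k-1\}$ has an $(\alpha,\beta)$-grouping. *)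

(* Defs.v *)
From mathcomp Require Import all_boot.
Set Implicit Arguments. Unset Strict Implicit. Unset Printing Implicit Defensive.

(* Ordinals below omega^omega in Cantor normal form
   alpha = omega^{e_1} + ... + omega^{e_m}, e_1 >= ... >= e_m,
   represented by the list of exponents in NONDECREASING order
   [:: e_m; ...; e_1] (smallest, i.e. last CNF term, first).
   The empty list is the ordinal 0. *)
Definition cnf := seq nat.

Definition opow (n : nat) : cnf := [:: n].

(* Fundamental sequence:  0[m] = 0, (b+1)[m] = b,
   (b + omega^(n+1))[m] = b + omega^n * m. *)
Definition fs (a : cnf) (m : nat) : cnf :=
  match a with
  | [::] => [::]
  | 0 :: t => t
  | n.+1 :: t => nseq m n ++ t
  end.

(* A finite set of naturals is represented by its increasing enumeration
   (a strictly increasing seq). {x_0 < ... < x_{l-1}} is a-large iff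
   a[x_0]...[x_{l-1}] = 0. *)
Definition large (a : cnf) (s : seq nat) : bool :=
  foldl fs a s == [::].

Definition fin_set (X : seq nat) : bool := sorted ltn X.

Definition interval_co (x y : nat) : seq nat := iota x (y - x).

Definition sparse (a : cnf) (X : seq nat) : Prop :=
  (forall x, x \in X -> 3 < x) /\
  (forall x y, x \in X -> y \in X -> x < y -> large a (interval_co x y)).

Definition grouping (a b : cnf) (X : seq nat) (P : nat -> nat -> nat)
    (Fs : seq (seq nat)) : Prop :=
  (forall i, i < size Fs ->
     fin_set (nth [::] Fs i) /\ {subset nth [::] Fs i <= X} /\
     nth [::] Fs i != [::] /\ large a (nth [::] Fs i)) /\
  (forall i j, i < j < size Fs ->
     last 0 (nth [::] Fs i) < head 0 (nth [::] Fs j)) /\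
  large b [seq last 0 F | F <- Fs] /\
  (forall i j, i < j < size Fs ->
     forall x x' y y', x \in nth [::] Fs i -> x' \in nth [::] Fs i ->
       y \in nth [::] Fs j -> y' \in nth [::] Fs j -> P x y = P x' y').

(* X admits an (a,b)-grouping for k colors: every P : [X]^2 -> {0,..,k-1}
   (only its values on pairs x < y of X matter) has an (a,b)-grouping. *)
Definition admits_grouping (a b : cnf) (k : nat) (X : seq nat) : Prop :=
  forall P : nat -> nat -> nat,
    (forall x y, x \in X -> y \in X -> x < y -> P x y < k) ->
    exists Fs, grouping a b X P Fs.

(* Main.v *)
Require Import Defs.
From mathcomp Require Import all_boot zify.
Set Implicit Arguments. Unset Strict Implicit. Unset Printing Implicit Defensive.

Fixpoint Ex (m : nat) (s : seq nat) : Prop :=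
  match m with
  | 0 => size s = 1
  | m'.+1 => match s with
             | [::] => False
             | x :: t => exists bs : seq (seq nat),
                 [/\ size bs = x, (forall b, b \in bs -> Ex m' b) & flatten bs = t]
             end
  end.

Lemma foldl_fs_nil r : foldl fs [::] r = [::].
Proof. by elim: r. Qed.

Lemma fold_Ex m s r g : Ex m s -> foldl fs (m :: g) (s ++ r) = foldl fs g r.
Proof.
elim: m s r g => [|m IH] s r g.
  by case: s => [|x [|? ?]] //= _.
case: s => [|x t] //= [bs [<- Hb <-]].
elim: bs Hb g => [|b bs IHb] Hb g //=.
rewrite -catA IH; last by apply: Hb; rewrite inE eqxx.

by apply: IHb => b' Hb'; apply: Hb; rewrite inE Hb' orbT.

Qed.

Lemma Ex_large m s : Ex m s -> large (opow m) s.
Proof. by move=> H; rewrite /large /opow -[s]cats0 fold_Ex. Qed.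

Lemma large_Ex_gen m g s : foldl fs (m :: g) s = [::] ->
  exists p r, [/\ s = p ++ r, Ex m p & foldl fs g r = [::]].
Proof.
elim: m g s => [|m IH] g s.
  case: s => [|x r] //= H.
  by exists [:: x], r.
case: s => [|x s'] //= H.
suff: exists bs r, [/\ size bs = x, (forall b, b \in bs -> Ex m b),
        s' = flatten bs ++ r & foldl fs g r = [::]].
  case=> bs [r [Hs Hb -> Hr]].
  exists (x :: flatten bs), r; split => //.
  by exists bs.
elim: x g s' H => [|x IHx] g s' H.
  by exists [::], s'.
rewrite /= in H.
have [p [r1 [-> Hp Hr1]]] := IH _ _ H.
have [bs [r [Hs Hb -> Hr]]] := IHx _ _ Hr1.
exists (p :: bs), r; split => //=.
- by rewrite Hs.
- by move=> b; rewrite inE => /orP [/eqP ->|]; [|apply: Hb].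
- by rewrite catA.
Qed.

Lemma large_Ex m s : large (opow m) s -> exists p r, s = p ++ r /\ Ex m p.
Proof.
rewrite /large /opow => /eqP /large_Ex_gen [p [r [-> Hp _]]].
by exists p, r.
Qed.

Lemma Ex_nil m s : Ex m s -> s <> [::].
Proof. by case: m => [|m]; case: s. Qed.

Lemma Ex_down m j s : Ex (m + j) s -> (forall z, z \in s -> 0 < z) ->
  exists t, Ex m t /\ subseq t s.
Proof.
elim: j s => [|j IH] s.
  by rewrite addn0 => H _; exists s; rewrite subseq_refl.
rewrite addnS; case: s => [|x t] //= [[|b bs] [Hs Hb Hf]] Hpos.
  by move: (Hpos x); rewrite inE eqxx /= -Hs => /(_ isT).
have Hbx : subseq b (x :: t).
  rewrite -Hf /=.
  exact: (subseq_trans (prefix_subseq b (flatten bs)) (subseq_cons _ x)).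
have [t' [Ht' Hsub]] := IH b (Hb b (mem_head _ _)) (fun z Hz => Hpos z (mem_subseq Hbx Hz)).
by exists t'; split => //; apply: subseq_trans Hsub Hbx.
Qed.

Lemma sorted_cat_lt (a b : seq nat) x y :
  sorted ltn (a ++ b) -> x \in a -> y \in b -> x < y.
Proof.
rewrite (sorted_pairwise ltn_trans) pairwise_cat => /and3P [H _ _] Hx Hy.
by move/allrelP: H => /(_ x y Hx Hy).
Qed.

Lemma sorted_catI (a b : seq nat) :
  sorted ltn a -> sorted ltn b -> (forall x y, x \in a -> y \in b -> x < y) ->
  sorted ltn (a ++ b).
Proof.
rewrite !(sorted_pairwise ltn_trans) pairwise_cat => Ha Hb H.
rewrite Ha Hb !andbT; apply/allrelP => x y; exact: H.
Qed.

Lemma sorted_catL (a b : seq nat) : sorted ltn (a ++ b) -> sorted ltn a.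
Proof. by move=> H; apply: (subseq_sorted ltn_trans (prefix_subseq a b) H). Qed.

Lemma sorted_catR (a b : seq nat) : sorted ltn (a ++ b) -> sorted ltn b.
Proof. by move=> H; apply: (subseq_sorted ltn_trans (suffix_subseq a b) H). Qed.

Lemma sorted_sub_subseq (s t : seq nat) :
  sorted ltn s -> sorted ltn t -> {subset s <= t} -> subseq s t.
Proof.
move=> Hs Ht Hsub.
apply/subseq_uniqP; first exact: sorted_uniq ltn_trans ltnn _ Ht.
apply: (irr_sorted_eq ltn_trans ltnn) => //; first exact: (sorted_filter ltn_trans _ Ht).
move=> x; rewrite mem_filter; case Hx: (x \in s) => //=.
by rewrite (Hsub x Hx).
Qed.

Lemma subseq_flatten (T : eqType) (a b : seq (seq T)) :
  subseq a b -> subseq (flatten a) (flatten b).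
Proof.
elim: b a => [|y b IH] [|x a] //=; try by rewrite sub0seq.
case: eqP => [-> | _] H.
  by apply: cat_subseq (subseq_refl _) (IH _ H).
apply: subseq_trans (IH _ H) _; exact: suffix_subseq.
Qed.

Lemma size_sorted_le (s : seq nat) M :
  sorted ltn s -> (forall z, z \in s -> z <= M) -> size s <= M.+1.
Proof.
move=> Hs HM; rewrite -(size_iota 0 M.+1).
apply: uniq_leq_size; first exact: sorted_uniq ltn_trans ltnn _ Hs.
by move=> z Hz; rewrite mem_iota /= add0n ltnS HM.
Qed.

Fixpoint H (m a : nat) : nat :=
  match m with 0 => a | m'.+1 => iter a (fun z => H m' z.+1) a end.

Lemma iter_ge (f : nat -> nat) n x : (forall z, z <= f z) -> x <= iter n f x.
Proof. move=> Hf; elim: n => //= n IH; exact: leq_trans IH (Hf _). Qed.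

Lemma iter_mono_n (f : nat -> nat) n n' x : (forall z, z <= f z) -> n <= n' ->
  iter n f x <= iter n' f x.
Proof.
move=> Hf /subnKC <-; elim: (n' - n) => [|d IH]; first by rewrite addn0.
by rewrite addnS /=; apply: leq_trans IH (Hf _).
Qed.

Lemma iter_mono_x (f : nat -> nat) n x y : {homo f : a b / a <= b} -> x <= y ->
  iter n f x <= iter n f y.
Proof. by move=> Hf Hxy; elim: n => //= n IH; apply: Hf. Qed.

Lemma H_prop m : (forall a, a <= H m a) /\ {homo H m : a b / a <= b}.
Proof.
elim: m => [|m [IH1 IH2]] /=; first by split.
have Hf : forall z, z <= H m z.+1 by move=> z; apply: leq_trans (IH1 z.+1).
split; first by move=> a; apply: iter_ge.
move=> a b Hab.
apply: (@leq_trans (iter a (fun z => H m z.+1) b)).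
  by apply: iter_mono_x => // u v Huv; apply: IH2.
exact: iter_mono_n.
Qed.

Lemma Ex_growth m s : Ex m s -> sorted ltn s -> H m (head 0 s) <= last 0 s.
Proof.
elim: m s => [|m IH] s.
  by case: s => [|x [|]] //=.
case: s => [|x t] //= [bs [Hsz Hb Hf]] Hp.
rewrite -Hf; rewrite -Hf in Hp.
have [_ Hmono] := H_prop m.
suff: forall bs z, path ltn z (flatten bs) -> (forall b, b \in bs -> Ex m b) ->
  iter (size bs) (fun z => H m z.+1) z <= last z (flatten bs).
  by move=> /(_ bs x Hp Hb); rewrite Hsz.
elim=> [|b bs' IHb] z Hp' Hb' //=.
have Hbm : Ex m b by apply: Hb'; rewrite inE eqxx.
case: b Hbm Hp' Hb' => [|y b'] Hbm; first by move/Ex_nil: Hbm.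
rewrite /= => /andP [Hxy Hp'] Hb'.
rewrite -[H m _.+1]/(iter (size bs').+1 (fun z0 => H m z0.+1) z) iterSr.
have Hs1 : sorted ltn (y :: b') by move: Hp'; rewrite cat_path => /andP [].
have Hg := IH _ Hbm Hs1; rewrite /= in Hg.
apply: (@leq_trans (iter (size bs') (fun z => H m z.+1) (last y b'))).
  apply: iter_mono_x; first by move=> u v Huv; apply: Hmono.
  by apply: leq_trans Hg; apply: Hmono.
have := IHb (last y b'); rewrite last_cat.
apply.
  by move: Hp'; rewrite cat_path => /andP [].
by move=> b0 Hb0; apply: Hb'; rewrite inE Hb0 orbT.
Qed.

Definition g (x : nat) := 2 ^ (x * x.+1).
Definition Bnd (x : nat) := (g x + 2) * (g x + 2) * x.+1.

Lemma g_mono x y : x <= y -> g x <= g y.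
Proof. by move=> Hxy; apply: leq_pexp2l => //; apply: leq_mul. Qed.

Lemma g_pos x : 0 < g x.
Proof. by rewrite /g expn_gt0. Qed.

Lemma pow_le_g c M sz : 0 < c -> c <= M -> sz <= M.+1 -> c ^ sz <= g M.
Proof.
move=> Hc HcM Hsz.
apply: (@leq_trans (c ^ M.+1)); first exact: leq_pexp2l.
rewrite /g expnM leq_exp2r //.
by apply: leq_trans HcM (ltnW (ltn_expl _ _)).
Qed.

Lemma Bnd_C C x : C <= g x -> (C.+2) * (C.+2) * x.+1 <= Bnd x.
Proof.
move=> H; rewrite /Bnd; apply: leq_mul => //.
by apply: leq_mul; rewrite addn2 ltnS.
Qed.

Lemma H1E a : H 1 a = a + a.
Proof. by rewrite /= iter_succn. Qed.

Lemma H2_ge a : 2 ^ a * a <= H 2 a.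
Proof.
suff: forall n z, 2 ^ n * z <= iter n (fun z => H 1 z.+1) z by apply.
elim=> [|n IH] z; first by rewrite /= mul1n.
rewrite iterS H1E expnS -mulnA.
have := IH z; lia.
Qed.

Lemma two_pow_ge x : x.+1 <= 2 ^ x.
Proof. exact: ltn_expl. Qed.

Lemma H3_ge x : 3 <= x -> 2 ^ (2 ^ (2 ^ x)) <= H 3 x.
Proof.
move=> Hx.
have Hf : forall z, 2 ^ z <= H 2 z.+1.
  move=> z; apply: leq_trans (H2_ge _); rewrite expnS; nia.
have Hf2 : forall z, z <= H 2 z.+1 by move=> z; apply: leq_trans (Hf z); exact: ltnW (ltn_expl _ _).
rewrite /=.
apply: (@leq_trans (iter 3 (fun z => H 2 z.+1) x)); last first.
  have := @iter_mono_n (fun z => H 2 z.+1) 3 x x Hf2 Hx; done.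
rewrite (_ : iter 3 _ x = H 2 (H 2 (H 2 x.+1).+1).+1) //.
apply: leq_trans (Hf _).
apply: leq_pexp2l => //.
apply: leq_trans (Hf _).
apply: leq_pexp2l => //.
Qed.

Lemma poly4 x : 3 <= x -> 2 * x * x + 3 * x + 2 <= 2 ^ (2 * x).
Proof.
move=> /subnKC <-; elim: (x - 3) => [|d IH]; first by [].
have -> : 2 ^ (2 * (3 + d.+1)) = 4 * 2 ^ (2 * (3 + d)).
  by rewrite addnS mulnS expnD.
nia.
Qed.

Lemma dbl_pow x : 2 * x <= 2 ^ x.
Proof.
elim: x => [|x IH] //; rewrite expnS; have := ltn_expl x (isT : 1 < 2); lia.
Qed.

Lemma Bnd_le x : 4 <= x -> Bnd x <= 2 ^ (2 ^ (2 ^ x)).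
Proof.
move=> Hx.
set k := x * x.+1.
have Hk : 1 <= k by rewrite /k; nia.
have H1 : g x + 2 <= 2 ^ k.+1.
  rewrite /g -/k expnS.
  have : 2 <= 2 ^ k by rewrite -{1}(expn1 2); apply: leq_pexp2l.
  lia.
have H2 : x.+1 <= 2 ^ x by apply: ltn_expl.
apply: (@leq_trans (2 ^ k.+1 * 2 ^ k.+1 * 2 ^ x)).
  by rewrite /Bnd; apply: leq_mul => //; apply: leq_mul.
rewrite -!expnD; apply: leq_pexp2l => //.
apply: (@leq_trans (2 ^ (2 * x))).
  have := poly4 (ltnW Hx); rewrite /k; nia.
apply: leq_pexp2l => //.
apply: leq_trans (dbl_pow _) _.
apply: leq_pexp2l => //; exact: dbl_pow.
Qed.

Lemma sparse_H3 X : sparse (opow 3) X ->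
  forall x y, x \in X -> y \in X -> x < y -> H 3 x < y.
Proof.
case=> _ Hsp x y Hx Hy Hxy.
have := Hsp x y Hx Hy Hxy; rewrite /interval_co => /large_Ex [p [r [Hpr Hp]]].
have Hsort : sorted ltn p.
  apply: sorted_catL (_ : sorted ltn (p ++ r)); rewrite -Hpr; exact: iota_ltn_sorted.
have Hg := Ex_growth Hp Hsort.
case: p Hpr Hp Hg Hsort => [|a p'] Hpr Hp Hg Hsort; first by move/Ex_nil: Hp.
have Ha : a = x.
  move: Hpr; case Hyx: (y - x) => [|L]; first by move: Hxy; rewrite -subn_gt0 Hyx.
  by move=> [].
have Hl : last a p' \in iota x (y - x) by rewrite Hpr mem_cat mem_last.
rewrite mem_iota in Hl.
move: Hg; rewrite /= Ha => Hg.
move/andP: Hl => [_ Hl].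
apply: leq_ltn_trans Hg _.
by move: Hl; rewrite Ha subnKC // ltnW.
Qed.

Lemma sparse_Bnd X : sparse (opow 3) X ->
  forall x y, x \in X -> y \in X -> x < y -> Bnd x <= y.
Proof.
move=> Hs x y Hx Hy Hxy.
have H4 : 4 <= x by case: Hs => /(_ x Hx).
apply: leq_trans (Bnd_le H4) _.
apply: leq_trans (H3_ge (ltnW H4)) _.
exact: ltnW (sparse_H3 Hs Hx Hy Hxy).
Qed.

Lemma maj_arith C S S' k a : C.+2 * k < S -> S' + k = S -> S' <= C.+1 * a -> S <= C.+2 * a.
Proof.
move=> H1 H2 H3.
have Hk : k < a by rewrite -(ltn_pmul2l (ltn0Sn C)); lia.
nia.
Qed.

Lemma maj C (s : seq nat) : (forall x, x \in s -> x < C.+1) ->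
  exists2 j, j < C.+1 & size s <= C.+1 * count_mem j s.
Proof.
elim: C s => [|C IH] s Hs.
  exists 0 => //; rewrite mul1n.
  have : all (pred1 0) s by apply/allP => x /Hs; rewrite ltnS leqn0.
  by rewrite all_count => /eqP ->.
set cnt := count_mem C.+1 s.
case: (leqP (size s) (C.+2 * cnt)) => Hc; first by exists C.+1.
set s' := [seq x <- s | x != C.+1].
have Hs' : forall x, x \in s' -> x < C.+1.
  move=> x; rewrite mem_filter => /andP [Hx /Hs]; rewrite ltnS leq_eqVlt.
  by rewrite (negbTE Hx).
have [j Hj Hsz] := IH s' Hs'.
exists j; first by apply: ltnW.
have Hcj : count_mem j s' = count_mem j s.
  rewrite /s' count_filter; apply: eq_count => x /=.
  case: eqP => [->|] //=; by rewrite ?andbT (ltn_eqF Hj).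
have Hss : size s' + cnt = size s.
  rewrite /s' size_filter /cnt -(count_predC (pred1 C.+1) s) addnC.
  by congr (_ + _); apply: eq_count => x.
rewrite Hcj in Hsz.
exact: (maj_arith Hc Hss Hsz).
Qed.

Section QSec.
Variable C : nat.
Variable col : nat -> nat.
Hypothesis HC : 0 < C.

Definition Qconds (Z : seq nat) :=
  (forall z, z \in Z -> col z < C /\ C.+2 <= z) /\
  (forall x y, x \in Z -> y \in Z -> x < y -> C.+2 * C.+2 * x.+1 <= y).

Lemma Qconds_sub Z Z' : {subset Z' <= Z} -> Qconds Z -> Qconds Z'.
Proof.
move=> Hs [H1 H2]; split; first by move=> z /Hs /H1.
by move=> x y /Hs Hx /Hs Hy; apply: H2.
Qed.

Definition Qconc m (Z : seq nat) :=
  exists S j, [/\ Ex m S, sorted ltn S, {subset S <= Z} &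
                  forall z, z \in S -> col z = j].

Lemma chunk m :
  (forall Bs, C < size Bs -> (forall b, b \in Bs -> Ex m b) ->
     sorted ltn (flatten Bs) -> Qconds (flatten Bs) -> Qconc m (flatten Bs)) ->
  forall Es, (forall b, b \in Es -> Ex m b) -> sorted ltn (flatten Es) ->
    Qconds (flatten Es) ->
  exists L : seq (nat * seq nat),
    [/\ size L = size Es %/ C.+1,
        forall p, p \in L -> [/\ p.1 < C, Ex m p.2 & forall z, z \in p.2 -> col z = p.1],
        sorted ltn (flatten (map snd L)) &
        {subset flatten (map snd L) <= flatten Es}].
Proof.
move=> IH Es.
elim: {Es}(size Es) {-2}Es (leqnn (size Es)) => [|N IHN] Es HN Hb Hs Hq.
  exists [::]; split => //; by move: HN; rewrite leqn0 => /eqP ->.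
case: (ltnP (size Es) C.+1) => Hlt.
  by exists [::]; split => //; rewrite divn_small.
set E1 := take C.+1 Es; set E2 := drop C.+1 Es.
have HE : Es = E1 ++ E2 by rewrite cat_take_drop.
have HF : flatten Es = flatten E1 ++ flatten E2 by rewrite HE flatten_cat.
have Hs1 : sorted ltn (flatten E1) by apply: sorted_catL (_ : sorted _ (_ ++ flatten E2)); rewrite -HF.
have Hs2 : sorted ltn (flatten E2) by apply: sorted_catR (_ : sorted _ (flatten E1 ++ _)); rewrite -HF.
have Hsub1 : {subset flatten E1 <= flatten Es} by move=> z Hz; rewrite HF mem_cat Hz.
have Hsub2 : {subset flatten E2 <= flatten Es} by move=> z Hz; rewrite HF mem_cat Hz orbT.
have [S [j [HS1 HS2 HS3 HS4]]] : Qconc m (flatten E1).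
  apply: IH => //.
  - by rewrite /E1 size_takel.
  - by move=> b Hb'; apply: Hb; rewrite HE mem_cat Hb'.
  - exact: Qconds_sub Hsub1 Hq.
have [L [HL1 HL2 HL3 HL4]] : exists L : seq (nat * seq nat),
    [/\ size L = size E2 %/ C.+1,
        forall p, p \in L -> [/\ p.1 < C, Ex m p.2 & forall z, z \in p.2 -> col z = p.1],
        sorted ltn (flatten (map snd L)) &
        {subset flatten (map snd L) <= flatten E2}].
  apply: IHN => //.
  - by rewrite /E2 size_drop; move: HN Hlt; lia.
  - by move=> b Hb'; apply: Hb; rewrite HE mem_cat Hb' orbT.
  - exact: Qconds_sub Hsub2 Hq.
exists ((j, S) :: L); split.
- rewrite /= HL1 /E2 size_drop.
  rewrite -{2}(subnKC Hlt) addnC divnDr ?dvdnn // divnn /=; lia.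
- move=> p; rewrite inE => /orP [/eqP -> /= | Hp]; last exact: HL2.
  split => //.
  have [z Hz] : exists z, z \in S by case: S HS1 {HS2 HS3 HS4} => [|z S'] H; [move/Ex_nil: H | exists z; rewrite inE eqxx].
  rewrite -(HS4 z Hz); case: Hq => /(_ z (Hsub1 z (HS3 z Hz))) [] //.
- rewrite /=; apply: sorted_catI => // x y Hx Hy.
  apply: (sorted_cat_lt (_ : sorted ltn (flatten E1 ++ flatten E2))).
  + by rewrite -HF.
  + exact: HS3.
  + exact: HL4.
- move=> z; rewrite /= mem_cat => /orP [/HS3 /Hsub1 // | /HL4 /Hsub2 //].
Qed.

Lemma wit m :
  (forall Bs, C < size Bs -> (forall b, b \in Bs -> Ex m b) ->
     sorted ltn (flatten Bs) -> Qconds (flatten Bs) -> Qconc m (flatten Bs)) ->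
  forall Z0, Qconds Z0 ->
  forall Bs (A : seq (nat * nat)), (forall b, b \in Bs -> Ex m.+1 b) ->
    sorted ltn (flatten Bs) -> {subset flatten Bs <= Z0} ->
    uniq (map fst A) ->
    (forall p, p \in A -> [/\ p.1 < C, col p.2 = p.1, p.2 \in Z0 &
                             forall z, z \in flatten Bs -> p.2 < z]) ->
    C < size Bs + size A -> Qconc m.+1 Z0.
Proof.
move=> IH Z0 HZ0; elim=> [|D Bs IHB] A HB Hs Hsub HA HAw Hsz.
  exfalso; move: Hsz; rewrite add0n; apply/negP; rewrite -leqNgt.
  rewrite -(size_map fst) -(size_iota 0 C); apply: uniq_leq_size => // j /mapP [p Hp ->].
  by rewrite mem_iota /=; case: (HAw p Hp).
have HD : Ex m.+1 D by apply: HB; rewrite inE eqxx.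
have Hsz' : C < size Bs + (size A).+1 by move: Hsz; rewrite /= addnS addSn.
clear Hsz.
case: D HD HB Hs Hsub HAw => [|d t] //= [Es [HEs HEb HEf]] HB Hs Hsub HAw.
subst t.
have HsE : sorted ltn (flatten Es).
  by move: Hs; rewrite (path_sortedE ltn_trans) => /andP [_ /sorted_catL].
have HsubE : {subset flatten Es <= Z0}.
  by move=> z Hz; apply: Hsub; rewrite inE mem_cat Hz orbT.
have HqE : Qconds (flatten Es) by apply: Qconds_sub HsubE HZ0.
have [L [HL1 HL2 HL3 HL4]] := chunk IH HEb HsE HqE.
have Hcol : forall x, x \in map fst L -> x < C.-1.+1.
  by move=> x /mapP [p Hp ->]; rewrite prednK //; case: (HL2 p Hp).
have [j Hj Hmaj] := maj Hcol.
rewrite prednK // size_map in Hj Hmaj.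
have Hd : d \in Z0 by apply: Hsub; rewrite inE eqxx.
have HdC : C.+2 <= d by case: HZ0 => /(_ d Hd) [].
set Ls := [seq q.2 | q <- L & q.1 == j].
have HLs : size Ls = count_mem j (map fst L).
  by rewrite size_map size_filter count_map.
have HLsub : subseq Ls (map snd L) by apply: map_subseq; apply: filter_subseq.
have HLsE : forall b, b \in Ls -> Ex m b /\ forall z, z \in b -> col z = j.
  move=> b /mapP [q]; rewrite mem_filter => /andP [/eqP Hqj HqL] ->.
  by case: (HL2 q HqL) => _ ? Hc; split => // z /Hc ->.
case: (boolP (j \in map fst A)) => HjA.
  case/mapP: HjA => [[j' e] Hp /= Hjj]; subst j'.
  have [_ Hce HeZ Hlt] := HAw _ Hp; rewrite /= in Hce HeZ Hlt.
  have Hed : e < d by apply: Hlt; rewrite inE eqxx.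
  have Hsp : C.+2 * C.+2 * e.+1 <= d by case: HZ0 => _ /(_ e d HeZ Hd Hed).
  have Hcnt : e < count_mem j (map fst L).
    have H1 : C.+2 * e.+1 <= size L.
      by rewrite HL1 HEs leq_divRL //; apply: leq_trans Hsp; nia.
    have H2 := leq_trans H1 Hmaj.
    nia.
  set Ts := take e Ls.
  have HTsz : size Ts = e by rewrite /Ts size_takel // HLs ltnW.
  have HTsub : subseq (flatten Ts) (flatten (map snd L)).
    by apply: subseq_flatten; apply: subseq_trans (take_subseq _ _) HLsub.
  have HTs : sorted ltn (flatten Ts) by exact: (subseq_sorted ltn_trans HTsub HL3).
  have HTin : forall z, z \in flatten Ts -> z \in flatten Es.
    by move=> z /(mem_subseq HTsub) /HL4.
  exists (e :: flatten Ts), j; split.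
  - exists Ts; split => // b /(mem_subseq (take_subseq _ _)) /HLsE []; done.
  - rewrite /= (path_sortedE ltn_trans) HTs andbT; apply/allP => z /HTin Hz.
    by apply: Hlt; rewrite inE mem_cat Hz orbT.
  - by move=> z; rewrite inE => /orP [/eqP -> // | /HTin /HsubE].
  - move=> z; rewrite inE => /orP [/eqP -> // | /flattenP [b Hb Hzb]].
    by case: (HLsE b (mem_subseq (take_subseq _ _) Hb)) => _ /(_ z Hzb).
have Hcnt : 0 < count_mem j (map fst L).
  have H1 : 0 < size L by rewrite HL1 HEs divn_gt0 // ltnW.
  have H2 := leq_trans H1 Hmaj; nia.
have [b Hb] : exists b, b \in Ls.
  by move: Hcnt; rewrite -HLs; case: (Ls) => [|b0 ?] //= _; exists b0; rewrite inE eqxx.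
have [Hbm Hbc] := HLsE b Hb.
case: b Hb Hbm Hbc => [|e b'] Hb Hbm Hbc; first by move/Ex_nil: Hbm.
have HeE : e \in flatten Es.
  by apply: HL4; apply: (mem_subseq (subseq_flatten HLsub)); apply/flattenP; exists (e :: b') => //; rewrite inE eqxx.
have Hsrt : sorted ltn (flatten Es ++ flatten Bs).
  by move: Hs; rewrite (path_sortedE ltn_trans) => /andP [].
apply: (IHB ((j, e) :: A)).
- by move=> b0 Hb0; apply: HB; rewrite inE Hb0 orbT.
- exact: sorted_catR Hsrt.
- by move=> z Hz; apply: Hsub; rewrite inE mem_cat Hz !orbT.
- by rewrite /= HjA.
- move=> p; rewrite inE => /orP [/eqP -> | Hp] /=.
    split => //; first by apply: Hbc; rewrite inE eqxx.
    + by apply: HsubE.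
    + by move=> z Hz; apply: (sorted_cat_lt Hsrt).
  case: (HAw p Hp) => H1 H2 H3 H4; split => // z Hz.
  by apply: H4; rewrite inE mem_cat Hz !orbT.
- by [].
Qed.

Lemma Qlem m : forall Bs, C < size Bs -> (forall b, b \in Bs -> Ex m b) ->
  sorted ltn (flatten Bs) -> Qconds (flatten Bs) -> Qconc m (flatten Bs).
Proof.
elim: m => [|m IH] Bs.
  case: Bs => [|b Bs] //= _ Hb _ _.
  have : Ex 0 b by apply: Hb; rewrite inE eqxx.
  case: b {Hb} => [|z [|]] //= _.
  exists [:: z], (col z); split => //.
  + by move=> y; rewrite inE => /eqP ->; rewrite inE eqxx.
  + by move=> y; rewrite inE => /eqP ->.
move=> Hsz Hb Hs Hq.
apply: (@wit m IH _ Hq Bs [::]) => //.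
by rewrite addn0.
Qed.
End QSec.

Lemma sorted_head_min (s : seq nat) z : sorted ltn s -> z \in s -> head 0 s <= z.
Proof.
case: s => [|a s] //= Hs; rewrite inE => /orP [/eqP -> // | Hz].
move: Hs; rewrite (path_sortedE ltn_trans) => /andP [/allP /(_ z Hz) H _].
exact: ltnW.
Qed.

Lemma sorted_last_max (s : seq nat) z : sorted ltn s -> z \in s -> z <= last 0 s.
Proof.
case: s => [|a s] //=.
elim: s a z => [|b s IH] a z /=; first by rewrite inE => _ /eqP ->.
move=> /andP [Hab Hp]; rewrite inE => /orP [/eqP -> | Hz].
  apply: leq_trans (ltnW Hab) _; apply: IH => //; exact: mem_head.
exact: IH.
Qed.

Lemma last_in (s : seq nat) : s <> [::] -> last 0 s \in s.
Proof. by case: s => [|a s] //= _; rewrite mem_last. Qed.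

Lemma head_in (s : seq nat) : s <> [::] -> head 0 s \in s.
Proof. by case: s => [|a s] //= _; rewrite mem_head. Qed.

Lemma code_arith a b A B : a < b -> A < B -> a + b * A < b * B.
Proof. move=> H1 H2; have : b * A.+1 <= b * B by rewrite leq_mul2l H2 orbT. nia. Qed.

Lemma Ex_succ m S : Ex m.+1 S -> exists r Gs,
  [/\ S = r :: flatten Gs, size Gs = r & forall b, b \in Gs -> Ex m b].
Proof. by case: S => [|r t] // [Gs [H1 H2 H3]]; exists r, Gs; rewrite H3. Qed.

Lemma Ex1_of h (l : seq nat) : size l = h -> Ex 1 (h :: l).
Proof.
move=> Hl; exists (map (fun z => [:: z]) l); split.
- by rewrite size_map.
- by move=> b /mapP [z _ ->].
- by elim: l {Hl} => //= z l ->.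
Qed.

Section Grp.
Variable X : seq nat.
Variable P : nat -> nat -> nat.
Variable c : nat.
Hypothesis Hc4 : 4 <= c.
Hypothesis HcX : forall z, z \in X -> c <= z.
Hypothesis HP : forall x y, x \in X -> y \in X -> x < y -> P x y < c.
Hypothesis HB : forall x y, x \in X -> y \in X -> x < y -> Bnd x <= y.

Definition codef (f : nat -> nat) (S : seq nat) := foldr (fun s acc => f s + c * acc) 0 S.
Definition code (S : seq nat) (w : nat) := codef (fun s => P s w) S.
Definition rcode (S : seq nat) (z : nat) := codef (P z) S.

Lemma codef_lt f S : (forall s, s \in S -> f s < c) -> codef f S < c ^ size S.
Proof.
elim: S => [|s S IH] //= H.
have H1 : codef f S < c ^ size S by apply: IH => s' Hs'; apply: H; rewrite inE Hs' orbT.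
have H2 := H s (mem_head _ _).
rewrite expnS; exact: code_arith H2 H1.
Qed.

Lemma codef_inj f f' S : (forall s, s \in S -> f s < c) -> (forall s, s \in S -> f' s < c) ->
  codef f S = codef f' S -> forall s, s \in S -> f s = f' s.
Proof.
elim: S => [|s S IH] //= H1 H2 He s0.
have Ha := H1 s (mem_head _ _); have Hb := H2 s (mem_head _ _).
have Hm : f s = f' s.
  by move: (congr1 (modn^~ c) He); rewrite ![f s + _]addnC ![f' s + _]addnC ![c * _]mulnC !modnMDl !modn_small.
have Hr : codef f S = codef f' S.
  by move: He; rewrite Hm => /addnI /eqP; rewrite eqn_pmul2l ?(leq_trans _ Hc4) // => /eqP.
rewrite inE => /orP [/eqP -> // | Hs0].
by apply: IH => // s' Hs'; [apply: H1 | apply: H2]; rewrite inE Hs' orbT.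
Qed.

Lemma code_lt S w : (forall s, s \in S -> P s w < c) -> code S w < c ^ size S.
Proof. exact: codef_lt. Qed.

Lemma code_inj S w w' : (forall s, s \in S -> P s w < c) -> (forall s, s \in S -> P s w' < c) ->
  code S w = code S w' -> forall s, s \in S -> P s w = P s w'.
Proof. exact: codef_inj. Qed.

Lemma rcode_lt S z : (forall s, s \in S -> P z s < c) -> rcode S z < c ^ size S.
Proof. exact: codef_lt. Qed.

Lemma rcode_inj S z z' : (forall s, s \in S -> P z s < c) -> (forall s, s \in S -> P z' s < c) ->
  rcode S z = rcode S z' -> forall s, s \in S -> P z s = P z' s.
Proof. exact: codef_inj. Qed.

Lemma Qconds_X C col Z :
  (forall z, z \in Z -> [/\ z \in X, col z < C, C <= g z & C.+2 <= z]) ->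
  Qconds C col Z.
Proof.
move=> H; split; first by move=> z /H [].
move=> x y Hx Hy Hxy.
have [HxX _ HCg _] := H x Hx; have [HyX _ _ _] := H y Hy.
apply: leq_trans (HB HxX HyX Hxy); exact: Bnd_C.
Qed.

Lemma pow_bound k z : z \in X ->
  (k = 0 \/ exists2 M, M \in X & M < z /\ k <= M.+1) ->
  c ^ k <= g z /\ (c ^ k).+2 <= z.
Proof.
move=> Hz [-> | [M HM [HMz Hk]]].
  by rewrite expn0 g_pos; split => //; apply: ltnW (leq_trans Hc4 (HcX Hz)).
have Hc : 0 < c by apply: leq_trans Hc4.
have H1 := pow_le_g Hc (HcX HM) Hk.
split; first by apply: leq_trans H1 (g_mono (ltnW HMz)).
apply: leq_trans _ (HB HM Hz HMz); move: H1; rewrite /Bnd; generalize (c ^ k) (g M) => a b Hab; nia.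
Qed.

Lemma pre_bound (pre : seq nat) z : z \in X -> {subset pre <= X} -> sorted ltn pre ->
  (forall s, s \in pre -> s < z) ->
  c ^ size pre <= g z /\ (c ^ size pre).+2 <= z.
Proof.
move=> Hz Hsub Hs Hlt; apply: pow_bound => //.
case: pre Hsub Hs Hlt => [|a pre] Hsub Hs Hlt; [by left | right].
have Hl : last 0 (a :: pre) \in a :: pre by apply: last_in.
exists (last 0 (a :: pre)); first exact: Hsub.
split; first exact: Hlt.
by apply: size_sorted_le => // y Hy; apply: sorted_last_max.
Qed.

Fixpoint Hom (Fs : seq (seq nat)) : Prop :=
  match Fs with
  | [::] => True
  | F :: Fs' => (forall G, G \in Fs' -> forall x x' y y', x \in F -> x' \in F ->
                  y \in G -> y' \in G -> P x y = P x' y') /\ Hom Fs'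
  end.

Fixpoint EHom (pre : seq nat) (Ss : seq (seq nat)) : Prop :=
  match Ss with
  | [::] => True
  | S0 :: Ss' => (forall s y y', s \in pre -> y \in S0 -> y' \in S0 -> P s y = P s y') /\
                EHom (pre ++ S0) Ss'
  end.

Lemma EHom_mem pre Ss : EHom pre Ss -> forall S, S \in Ss ->
  forall s y y', s \in pre -> y \in S -> y' \in S -> P s y = P s y'.
Proof.
elim: Ss pre => [|S0 Ss IH] pre //= [H1 H2] S.
rewrite inE => /orP [/eqP -> | HS]; first exact: H1.
move=> s y y' Hs; apply: IH H2 _ HS _ _ _ _; by rewrite mem_cat Hs.
Qed.


Lemma sorted_sub2 (a b a' b' : seq nat) : sorted ltn (a ++ b) -> {subset a' <= a} -> {subset b' <= b} ->
  sorted ltn a' -> sorted ltn b' -> sorted ltn (a' ++ b').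
Proof.
move=> Hs Ha Hb Ha' Hb'; apply: sorted_catI => // x y /Ha Hx /Hb Hy.
exact: sorted_cat_lt Hs Hx Hy.
Qed.

Lemma EH m : forall Es pre, (forall b, b \in Es -> Ex m.+1 b) ->
  sorted ltn (pre ++ flatten Es) -> {subset pre ++ flatten Es <= X} ->
  exists Ss, [/\ size Ss = size Es, (forall S, S \in Ss -> Ex m S),
     sorted ltn (flatten Ss), {subset flatten Ss <= flatten Es} & EHom pre Ss].
Proof.
elim=> [|E Es IH] pre HE Hs Hsub; first by exists [::].
have HE1 : Ex m.+1 E by apply: HE; rewrite inE eqxx.
case: E HE1 HE Hs Hsub => [|e t] // [Fs [HFs HFb HFf]] HE Hs Hsub; subst t.
rewrite /= in Hs Hsub.
have Hspre : sorted ltn pre by apply: sorted_catL Hs.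
have HpreX : {subset pre <= X} by move=> z Hz; apply: Hsub; rewrite mem_cat Hz.
have HeX : e \in X by apply: Hsub; rewrite mem_cat inE eqxx orbT.
have Hlt : forall s z, s \in pre -> z \in e :: flatten Fs ++ flatten Es -> s < z.
  by move=> s z Hs1 Hz; apply: (sorted_cat_lt Hs).
have Hrest : sorted ltn (e :: flatten Fs ++ flatten Es) by apply: sorted_catR Hs.
have HsF : sorted ltn (flatten Fs ++ flatten Es).
  by move: Hrest; rewrite /= (path_sortedE ltn_trans) => /andP [].
have HFX : forall z, z \in flatten Fs -> z \in X.
  by move=> z Hz; apply: Hsub; rewrite mem_cat inE mem_cat Hz !orbT.
have Hpb := pre_bound HeX HpreX Hspre (fun s Hs1 => Hlt s e Hs1 (mem_head _ _)).
have HC : 0 < c ^ size pre by rewrite expn_gt0 (leq_trans _ Hc4).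
have HQ : Qconc (code pre) m (flatten Fs).
  apply: (@Qlem (c ^ size pre) (code pre) HC m Fs).
  - by rewrite HFs; case: Hpb => _ H; apply: leq_trans H.
  - exact: HFb.
  - exact: sorted_catL HsF.
  - apply: Qconds_X => z Hz; have HzX := HFX z Hz.
    have Hltz : forall s, s \in pre -> s < z.
      by move=> s Hs1; apply: Hlt => //; rewrite inE mem_cat Hz orbT.
    have [H1 H2] := pre_bound HzX HpreX Hspre Hltz.
    split => //; apply: code_lt => s Hs1; apply: HP => //; [exact: HpreX | exact: Hltz].
have [S [j [HS1 HS2 HS3 HS4]]] := HQ.
have HSsub : {subset S <= e :: flatten Fs ++ flatten Es}.
  by move=> z /HS3 Hz; rewrite inE mem_cat Hz orbT.
have Hsrt' : sorted ltn ((pre ++ S) ++ flatten Es).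
  rewrite -catA; apply: (sorted_sub2 (a' := pre) (b' := S ++ flatten Es) Hs) => //.
  + move=> z; rewrite mem_cat => /orP [/HS3 Hz | Hz]; by rewrite inE mem_cat Hz ?orbT.
  + apply: sorted_catI => //; first exact: sorted_catR HsF.
    move=> x y /HS3 Hx Hy; exact: sorted_cat_lt HsF Hx Hy.
have Hsub' : {subset (pre ++ S) ++ flatten Es <= X}.
  move=> z; rewrite !mem_cat => /orP [/orP [Hz | /HS3 Hz] | Hz]; apply: Hsub; rewrite mem_cat ?Hz //.
  + by rewrite inE mem_cat Hz orbT orbT.
  + by rewrite inE mem_cat Hz !orbT.
have [Ss [H1 H2 H3 H4 H5]] := IH (pre ++ S) (fun b Hb => HE b (mem_behead (s := _ :: Es) Hb)) Hsrt' Hsub'.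
exists (S :: Ss); split => //=.
- by rewrite H1.
- by move=> S0; rewrite inE => /orP [/eqP -> | /H2].
- apply: sorted_sub2 HsF _ H4 HS2 H3 => //.
- move=> z; rewrite mem_cat => /orP [/HS3 Hz | /H4 Hz]; by rewrite inE mem_cat Hz ?orbT.
- split => // s y y' Hs1 Hy Hy'.
  have Hlts : forall w, w \in S -> s < w by move=> w /HSsub Hw; apply: Hlt.
  apply: (@code_inj pre) => //.
  + by move=> s' Hs'; apply: HP; [exact: HpreX | exact: HFX (HS3 _ Hy) | apply: Hlt => //; exact: HSsub].
  + by move=> s' Hs'; apply: HP; [exact: HpreX | exact: HFX (HS3 _ Hy') | apply: Hlt => //; exact: HSsub].
  + by rewrite (HS4 y Hy) (HS4 y' Hy').
Qed.


Lemma pick n h : h \in X -> forall Ss pre, EHom pre Ss -> (forall S, S \in Ss -> Ex n.+1 S) ->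
  sorted ltn (flatten Ss) -> {subset flatten Ss <= X} ->
  (forall z, z \in flatten Ss -> h < z) -> size Ss <= h.+1 ->
  exists Fs, [/\ (forall F, F \in Fs -> Ex n F /\ sorted ltn F),
     sorted ltn (flatten Fs), {subset flatten Fs <= flatten Ss},
     size Fs = size Ss &
     Hom Fs /\ forall G, G \in Fs -> exists2 S, S \in Ss & {subset G <= S}].
Proof.
move=> HhX; elim=> [|S Ss IH] pre HEH HSs Hs HsX Hh Hsz; first by exists [::].
case: HEH => HEH1 HEH2.
have HS1 : Ex n.+1 S by apply: HSs; rewrite inE eqxx.
have HSs' : forall S', S' \in Ss -> Ex n.+1 S' by move=> S' HS'; apply: HSs; rewrite inE HS' orbT.
rewrite /= in Hs HsX Hh Hsz.
have HsSs : sorted ltn (flatten Ss) by apply: sorted_catR Hs.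
have HSX : {subset S <= X} by move=> z Hz; apply: HsX; rewrite mem_cat Hz.
have HSsX : {subset flatten Ss <= X} by move=> z Hz; apply: HsX; rewrite mem_cat Hz orbT.
set heads := map (head 0) Ss.
have Hheads : forall t, t \in heads -> exists2 S', S' \in Ss & t \in S'.
  move=> t /mapP [S' HS' ->]; exists S' => //; apply: head_in; exact: Ex_nil (HSs' S' HS').
have HheadsF : forall t, t \in heads -> t \in flatten Ss.
  by move=> t /Hheads [S' HS' Ht]; apply/flattenP; exists S'.
have HPz : forall z t, z \in S -> t \in heads -> P z t < c.
  move=> z t Hz Ht; apply: HP; [exact: HSX | exact: HSsX (HheadsF t Ht) |].
  exact: sorted_cat_lt Hs Hz (HheadsF t Ht).
have Hkh : size heads <= h by rewrite size_map.
have [r [Gs [HSe HGs HGb]]] := Ex_succ HS1; subst S.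
have HrX : r \in X by apply: HSX; rewrite inE eqxx.
have Hhr : h < r by apply: Hh; rewrite inE eqxx.
have Hpb : forall z, z \in X -> h < z -> c ^ size heads <= g z /\ (c ^ size heads).+2 <= z.
  move=> z Hz Hhz; apply: pow_bound => //; right; exists h => //; split => //; exact: leqW.
have HC : 0 < c ^ size heads by rewrite expn_gt0 (leq_trans _ Hc4).
have HsG : sorted ltn (flatten Gs).
  by move: Hs; rewrite cat_cons /= (path_sortedE ltn_trans) => /andP [_ /sorted_catL].
have HQ : Qconc (rcode heads) n (flatten Gs).
  apply: (@Qlem (c ^ size heads) (rcode heads) HC n Gs) => //.
  - by rewrite HGs; case: (Hpb r HrX Hhr) => _ H; apply: leq_trans H.
  - apply: Qconds_X => z Hz.
    have HzS : z \in r :: flatten Gs by rewrite inE Hz orbT.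
    have HzX := HSX z HzS.
    have Hhz : h < z by apply: Hh; rewrite mem_cat HzS.
    have [H1 H2] := Hpb z HzX Hhz.
    split => //; apply: rcode_lt => s Hs1; exact: HPz.
have [F [j [HF1 HF2 HF3 HF4]]] := HQ.
have HFS : {subset F <= r :: flatten Gs} by move=> z /HF3 Hz; rewrite inE Hz orbT.
have Hh' : forall z, z \in flatten Ss -> h < z by move=> z Hz; apply: Hh; rewrite mem_cat Hz orbT.
have [Fs [H1 H2 H3 H4 [H5 H6]]] := IH _ HEH2 HSs' HsSs HSsX Hh' (ltnW Hsz).
exists (F :: Fs); split => //=.
- by move=> F0; rewrite inE => /orP [/eqP -> | /H1].
- exact: (sorted_sub2 Hs HFS H3 HF2 H2).
- by move=> z; rewrite mem_cat => /orP [/HFS Hz | /H3 Hz]; rewrite -cat_cons mem_cat Hz ?orbT.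
- by rewrite H4.
- split.
  + split => // G HG x x' y y' Hx Hx' Hy Hy'.
    have [S' HS' HGS'] := H6 G HG.
    have HS'n : S' <> [::] by exact: Ex_nil (HSs' S' HS').
    have Hhd : head 0 S' \in heads by apply: map_f.
    have Hx1 : x \in pre ++ r :: flatten Gs by rewrite mem_cat HFS ?orbT.
    have Hx2 : x' \in pre ++ r :: flatten Gs by rewrite mem_cat HFS ?orbT.
    rewrite (EHom_mem HEH2 HS' Hx1 (HGS' y Hy) (head_in HS'n)).
    rewrite (EHom_mem HEH2 HS' Hx2 (HGS' y' Hy') (head_in HS'n)).
    apply: (@rcode_inj heads) => //.
    * by move=> t Ht; apply: HPz => //; exact: HFS.
    * by move=> t Ht; apply: HPz => //; exact: HFS.
    * by rewrite (HF4 x Hx) (HF4 x' Hx').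
  + move=> G; rewrite inE => /orP [/eqP -> | /H6 [S' HS' HGS']].
      by exists (r :: flatten Gs); rewrite ?inE ?eqxx.
    by exists S' => //; rewrite inE HS' orbT.
Qed.


Definition Good n Fs (Y : seq nat) :=
  [/\ forall F, F \in Fs -> [/\ Ex n F, sorted ltn F & {subset F <= Y}],
      sorted ltn (flatten Fs) & Hom Fs].

Lemma X_pos z : z \in X -> 0 < z.
Proof. by move=> Hz; apply: leq_trans (HcX Hz); apply: leq_trans Hc4. Qed.

Lemma base n Y : Ex (n + 5) Y -> sorted ltn Y -> {subset Y <= X} ->
  exists Fs, Good n Fs Y /\ Ex 1 (map (last 0) Fs).
Proof.
rewrite (_ : n + 5 = (n + 4).+1); last by rewrite addnS.
move=> /Ex_succ [y [Ds [HY HDs HDb]]] HsY HYX; subst Y.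
have HyX : y \in X by apply: HYX; rewrite inE eqxx.
have Hy4 : 4 <= y by apply: leq_trans Hc4 (HcX HyX).
case: Ds HDs HDb HsY HYX => [|D1 [|D2 Ds']] HDs HDb HsY HYX; try by move: Hy4; rewrite -HDs.
have HD1 : Ex (n + 4) D1 by apply: HDb; rewrite inE eqxx.
have HD2 : Ex (n + 4) D2 by apply: HDb; rewrite !inE eqxx orbT.
rewrite (_ : n + 4 = (n + 3).+1) in HD1 HD2; last by rewrite addnS.
have [d1 [E1s [HD1e HE1s HE1b]]] := Ex_succ HD1.
have [d2 [E2s [HD2e HE2s HE2b]]] := Ex_succ HD2.
rewrite /= in HsY HYX.
have HsD : sorted ltn (D1 ++ D2 ++ flatten Ds').
  by move: HsY; rewrite /= (path_sortedE ltn_trans) => /andP [].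
have HyD : forall z, z \in D1 ++ D2 ++ flatten Ds' -> y < z.
  move: HsY; rewrite /= (path_sortedE ltn_trans) => /andP [/allP H _] z Hz; exact: H.
have HD1X : {subset D1 <= X} by move=> z Hz; apply: HYX; rewrite inE mem_cat Hz orbT.
have HD2X : {subset D2 <= X} by move=> z Hz; apply: HYX; rewrite inE !mem_cat Hz !orbT.
have HD1Y : {subset D1 <= y :: D1 ++ D2 ++ flatten Ds'} by move=> z Hz; rewrite inE mem_cat Hz orbT.
have HD2Y : {subset D2 <= y :: D1 ++ D2 ++ flatten Ds'} by move=> z Hz; rewrite inE !mem_cat Hz !orbT.
have Hs12 : sorted ltn (D1 ++ D2).
  by move: HsD; rewrite catA => /sorted_catL.
have Hlt12 : forall x z, x \in D1 -> z \in D2 -> x < z by move=> x z; apply: sorted_cat_lt Hs12.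
have HsD1 : sorted ltn D1 by apply: sorted_catL Hs12.
have HsD2 : sorted ltn D2 by apply: sorted_catR Hs12.
have HE1D : {subset flatten E1s <= D1} by move=> z Hz; rewrite HD1e inE Hz orbT.
have HE2D : {subset flatten E2s <= D2} by move=> z Hz; rewrite HD2e inE Hz orbT.
have HsE1 : sorted ltn (flatten E1s) by move: HsD1; rewrite HD1e /= (path_sortedE ltn_trans) => /andP [].
have HsE2 : sorted ltn (flatten E2s) by move: HsD2; rewrite HD2e /= (path_sortedE ltn_trans) => /andP [].
have Hd2 : d2 \in D2 by rewrite HD2e mem_head.
have Hd1 : d1 \in D1 by rewrite HD1e mem_head.
have HCA : 0 < c ^ size D1 by rewrite expn_gt0 (leq_trans _ Hc4).
have HQA : Qconc (code D1) (n + 3) (flatten E2s).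
  apply: (@Qlem (c ^ size D1) (code D1) HCA (n + 3) E2s) => //.
  - rewrite HE2s; have [_ H] := pre_bound (HD2X _ Hd2) HD1X HsD1 (fun s Hs => Hlt12 s d2 Hs Hd2).
    exact: leq_trans H.
  - apply: Qconds_X => z Hz.
    have HzX := HD2X z (HE2D z Hz).
    have Hltz : forall s, s \in D1 -> s < z by move=> s Hs; apply: Hlt12 => //; exact: HE2D.
    have [H1 H2] := pre_bound HzX HD1X HsD1 Hltz.
    split => //; apply: code_lt => s Hs; apply: HP => //; [exact: HD1X | exact: Hltz].
have [W [jA [HW1 HW2 HW3 HW4]]] := HQA.
have HWn : W <> [::] by exact: Ex_nil HW1.
set w0 := head 0 W.
have Hw0 : w0 \in W by apply: head_in.
have Hw0D : w0 \in D2 by apply: HE2D; apply: HW3.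
have HcC : 0 < c by apply: leq_trans Hc4.
have Hyb : forall z, z \in X -> y < z -> c <= g z /\ c.+2 <= z.
  move=> z Hz Hyz.
  have := @pre_bound [:: y] z Hz; rewrite /= expn1; apply => //.
  - by move=> x; rewrite inE => /eqP ->.
  - by move=> x; rewrite inE => /eqP ->.
have HQB : Qconc (fun s => P s w0) (n + 3) (flatten E1s).
  apply: (@Qlem c (fun s => P s w0) HcC (n + 3) E1s) => //.
  - rewrite HE1s; have Hyd1 : y < d1 by apply: HyD; rewrite mem_cat Hd1.
    have [_ H] := Hyb d1 (HD1X _ Hd1) Hyd1.
    exact: leq_trans H.
  - apply: Qconds_X => z Hz.
    have HzD1 := HE1D z Hz.
    have HzX := HD1X z HzD1.
    have Hyz : y < z by apply: HyD; rewrite mem_cat HzD1.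
    have [H1 H2] := Hyb z HzX Hyz.
    split => //; apply: HP => //; [exact: HD2X | exact: Hlt12].
have [F0' [jB [HF1 HF2 HF3 HF4]]] := HQB.
have HF0'X : forall z, z \in F0' -> 0 < z by move=> z /HF3 /HE1D /HD1X; apply: X_pos.
have [F0 [HF0 HF0sub]] := Ex_down HF1 HF0'X.
have HF0s : sorted ltn F0 by exact: (subseq_sorted ltn_trans HF0sub HF2).
have HF0D1 : {subset F0 <= D1} by move=> z /(mem_subseq HF0sub) /HF3 /HE1D.
have HF0n : F0 <> [::] by exact: Ex_nil HF0.
set h := last 0 F0.
have HhD1 : h \in D1 by apply: HF0D1; apply: last_in.
have HhX : h \in X by apply: HD1X.
rewrite (_ : n + 3 = (n + 2).+1) in HW1; last by rewrite addnS.
have [w [Es [HWe HEs HEb]]] := Ex_succ HW1.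
have HwD2 : w \in D2 by apply: HE2D; apply: HW3; rewrite HWe mem_head.
have Hhw : h < w by apply: Hlt12.
have HEsW : {subset flatten Es <= W} by move=> z Hz; rewrite HWe inE Hz orbT.
have HsEs : sorted ltn (flatten Es) by move: HW2; rewrite HWe /= (path_sortedE ltn_trans) => /andP [].
set Es' := take h Es.
have HEs'sz : size Es' = h by rewrite /Es' size_takel // HEs ltnW.
have HEs'sub : subseq (flatten Es') (flatten Es) by apply: subseq_flatten; apply: take_subseq.
have HEs'W : {subset flatten Es' <= W} by move=> z /(mem_subseq HEs'sub) /HEsW.
have HWD2 : {subset W <= D2} by move=> z /HW3 /HE2D.
have HEH := @EH (n + 1) Es' [::].
have [Ss [HS1 HS2 HS3 HS4 HS5]] : exists Ss, [/\ size Ss = size Es', (forall S, S \in Ss -> Ex (n + 1) S),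
     sorted ltn (flatten Ss), {subset flatten Ss <= flatten Es'} & EHom [::] Ss].
  apply: HEH.
  - move=> b /(mem_subseq (take_subseq _ _)) /HEb; by rewrite (_ : n + 2 = (n + 1).+1) // addnS.
  - exact: (subseq_sorted ltn_trans HEs'sub HsEs).
  - by move=> z /HEs'W /HWD2 /HD2X.
have [Fs' [HG1 HG2 HG3 HG4 [HG5 _]]] : exists Fs, [/\ (forall F, F \in Fs -> Ex n F /\ sorted ltn F),
     sorted ltn (flatten Fs), {subset flatten Fs <= flatten Ss},
     size Fs = size Ss &
     Hom Fs /\ forall G, G \in Fs -> exists2 S, S \in Ss & {subset G <= S}].
  apply: (@pick n h HhX Ss [::]) => //.
  - by move=> S HS; rewrite -addn1; apply: HS2.
  - by move=> z /HS4 /HEs'W /HWD2 /HD2X.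
  - by move=> z /HS4 /HEs'W /HWD2 Hz; apply: Hlt12.
  - by rewrite HS1 HEs'sz.
have HFsD2 : {subset flatten Fs' <= D2} by move=> z /HG3 /HS4 /HEs'W /HWD2.
have HFsW : {subset flatten Fs' <= W} by move=> z /HG3 /HS4 /HEs'W.
exists (F0 :: Fs'); split.
- split.
  + move=> F; rewrite inE => /orP [/eqP -> | HF].
      by split => // z /HF0D1 /HD1Y.
    have [H1 H2] := HG1 F HF; split => // z Hz.
    by apply: HD2Y; apply: HFsD2; apply/flattenP; exists F.
  + rewrite /=; exact: (sorted_sub2 Hs12 HF0D1 HFsD2 HF0s HG2).
  + split => // G HG x x' y0 y0' Hx Hx' Hy Hy'.
    have HyW : y0 \in W by apply: HFsW; apply/flattenP; exists G.
    have Hy'W : y0' \in W by apply: HFsW; apply/flattenP; exists G.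
    have Hcx : forall v, v \in W -> forall s, s \in D1 -> P s v < c.
      move=> v Hv s Hs; apply: HP; [exact: HD1X | exact: HD2X (HWD2 _ Hv) | exact: Hlt12 (HWD2 _ Hv)].
    have Heq : forall v, v \in W -> forall s, s \in D1 -> P s v = P s w0.
      move=> v Hv s Hs; apply: (@code_inj D1) => //; [exact: Hcx | exact: Hcx |].
      by rewrite (HW4 v Hv) (HW4 w0 Hw0).
    rewrite (Heq y0 HyW x (HF0D1 x Hx)) (Heq y0' Hy'W x' (HF0D1 x' Hx')).
    by rewrite (HF4 x (mem_subseq HF0sub Hx)) (HF4 x' (mem_subseq HF0sub Hx')).
- rewrite /= -/h; apply: Ex1_of; by rewrite size_map HG4 HS1 HEs'sz.
Qed.

End Grp.

Definition Pr := (nat * seq (seq nat))%type.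

Lemma split_by (bs : seq (seq nat)) (rest : seq Pr) : map fst rest = flatten bs ->
  exists Rs : seq (seq Pr), rest = flatten Rs /\ map (map fst) Rs = bs.
Proof.
elim: bs rest => [|b bs IH] rest /=.
  by case: rest => // _; exists [::].
move=> Hr.
have H1 : map fst (take (size b) rest) = b by rewrite map_take Hr take_size_cat.
have H2 : map fst (drop (size b) rest) = flatten bs by rewrite map_drop Hr drop_size_cat.
have [Rs [HR1 HR2]] := IH _ H2.
exists (take (size b) rest :: Rs); split; last by rewrite /= H1 HR2.
by rewrite /= -HR1 cat_take_drop.
Qed.

Lemma flatten_map_flatten (Rs : seq (seq Pr)) :
  flatten (map snd (flatten Rs)) = flatten (map (fun R => flatten (map snd R)) Rs).
Proof. by elim: Rs => //= R Rs <-; rewrite map_cat flatten_cat. Qed.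

Definition pcond (pr : Pr) := Ex 1 (map (last 0) pr.2) /\ head 0 (map (last 0) pr.2) <= pr.1.

Lemma comb k : forall Prs : seq Pr, Ex k (map fst Prs) ->
  (forall pr, pr \in Prs -> pcond pr) ->
  exists Fs, subseq Fs (flatten (map snd Prs)) /\ Ex k.+1 (map (last 0) Fs).
Proof.
elim: k => [|k IH] Prs.
  case: Prs => [|pr [|]] //= _ H.
  exists pr.2; rewrite cats0 subseq_refl; split => //.
  by case: (H pr (mem_head _ _)).
case: Prs => [|pr0 rest] //= [bs [Hsz Hb Hf]] Hc.
have [Rs [HR1 HR2]] := split_by (esym Hf).
have [Hp1 Hp2] := Hc pr0 (mem_head _ _).
case: pr0 Hc Hsz Hp1 Hp2 => g0 [|F00 Fs0'] // Hc Hsz Hp1 Hp2.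
rewrite /= in Hp2 Hsz.
set a := last 0 F00.
have HRsz : size Rs = g0 by rewrite -Hsz -HR2 size_map.
have Hinner : forall Rs', (forall R, R \in Rs' -> Ex k (map fst R) /\ forall pr, pr \in R -> pcond pr) ->
  exists Us, [/\ size Us = size Rs', (forall U, U \in Us -> Ex k.+1 (map (last 0) U)) &
    subseq (flatten Us) (flatten (map (fun R => flatten (map snd R)) Rs'))].
  elim=> [|R Rs' IHR] HR; first by exists [::].
  have [HR1' HR2'] := HR R (mem_head _ _).
  have [U [HU1 HU2]] := IH R HR1' HR2'.
  have [Us [HUs1 HUs2 HUs3]] := IHR (fun R0 HR0 => HR R0 (mem_behead (s := R :: Rs') HR0)).
  exists (U :: Us); split => /=.
  - by rewrite HUs1.
  - by move=> U0; rewrite inE => /orP [/eqP -> | /HUs2].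
  - exact: cat_subseq.
have Htk : forall R, R \in take a Rs -> Ex k (map fst R) /\ forall pr, pr \in R -> pcond pr.
  move=> R HR.
  have HRin : R \in Rs by apply: (mem_subseq (take_subseq _ _)) HR.
  split.
    by rewrite -HR2 in Hb; apply: Hb; apply: map_f.
  move=> pr Hpr; apply: Hc; rewrite inE HR1; apply/orP; right.
  by apply/flattenP; exists R.
have [Us [HU1 HU2 HU3]] := Hinner (take a Rs) Htk.
exists (F00 :: flatten Us); split.
- rewrite /= eqxx; apply: subseq_trans (suffix_subseq Fs0' _).
  rewrite HR1 flatten_map_flatten; apply: subseq_trans HU3 _.
  by apply: subseq_flatten; apply: map_subseq; apply: take_subseq.
- rewrite /= map_flatten; exists (map (map (last 0)) Us); split => //.
  + by rewrite size_map HU1 size_takel // HRsz.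
  + by move=> b /mapP [U HU ->]; apply: HU2.
Qed.

Section Main.
Variable X : seq nat.
Variable P : nat -> nat -> nat.
Variable c : nat.
Hypothesis Hc4 : 4 <= c.
Hypothesis HcX : forall z, z \in X -> c <= z.
Hypothesis HP : forall x y, x \in X -> y \in X -> x < y -> P x y < c.
Hypothesis HB : forall x y, x \in X -> y \in X -> x < y -> Bnd x <= y.

Definition cross (F G : seq nat) := forall x x' y y', x \in F -> x' \in F -> y \in G -> y' \in G ->
  P x y = P x' y'.

Lemma Hom_subseq Fs Gs : subseq Fs Gs -> Hom P Gs -> Hom P Fs.
Proof.
elim: Gs Fs => [|G Gs IH] [|F Fs] //= Hsub [H1 H2].
case: eqP Hsub => [HFG | _] Hsub.
  subst F; split; last exact: IH.
  by move=> G' HG'; apply: H1; apply: (mem_subseq Hsub).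
by apply: IH Hsub H2.
Qed.

Lemma Hom_cat a b : Hom P a -> Hom P b -> (forall F G, F \in a -> G \in b -> cross F G) ->
  Hom P (a ++ b).
Proof.
elim: a => [|F a IH] //= [H1 H2] Hb Hc.
split.
  move=> G; rewrite mem_cat => /orP [HG | HG]; first exact: H1.
  by move=> x x' y y'; apply: Hc => //; rewrite mem_head.
by apply: IH => // F' G HF' HG; apply: Hc => //; rewrite inE HF' orbT.
Qed.

Fixpoint rel2 n (Gs : seq (seq nat)) (Prs : seq Pr) : Prop :=
  match Gs, Prs with
  | [::], [::] => True
  | G :: Gs', pr :: Prs' => (pr.1 = last 0 G /\ pcond pr /\ Good P n pr.2 G) /\ rel2 n Gs' Prs'
  | _, _ => False
  end.

Lemma build n Gs : (forall G, G \in Gs -> [/\ Ex (n + 6) G, sorted ltn G & {subset G <= X}]) ->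
  exists Prs, rel2 n Gs Prs.
Proof.
elim: Gs => [|G Gs IH] HG; first by exists [::].
have [Prs HPrs] := IH (fun G0 HG0 => HG G0 (mem_behead (s := G :: Gs) HG0)).
have [HG1 HG2 HG3] := HG G (mem_head _ _).
rewrite (_ : n + 6 = (n + 5) + 1) in HG1; last by rewrite -addnA.
have Hpos : forall z, z \in G -> 0 < z.
  by move=> z /HG3 Hz; apply: leq_trans (HcX Hz); apply: leq_trans Hc4.
have [T [HT Hsub]] := Ex_down HG1 Hpos.
have HTs : sorted ltn T by exact: (subseq_sorted ltn_trans Hsub HG2).
have HTX : {subset T <= X} by move=> z /(mem_subseq Hsub) /HG3.
have [Fs [[HF1 HF2 HF3] HFE]] := base Hc4 HcX HP HB HT HTs HTX.
exists ((last 0 G, Fs) :: Prs); split => //; split => //; split.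
- split => //=.
  case: Fs HF1 HF2 HF3 HFE => [|F Fs] //= HF1 _ _ _.
  have [HFx HFs HFsub] := HF1 F (mem_head _ _).
  apply: sorted_last_max => //; apply: (mem_subseq Hsub); apply: HFsub; apply: last_in.
  exact: Ex_nil HFx.
- split => // F HF; have [H1 H2 H3] := HF1 F HF; by split => // z /H3 /(mem_subseq Hsub).
Qed.

Lemma rel2_fst n Gs Prs : rel2 n Gs Prs -> map fst Prs = map (last 0) Gs.
Proof. by elim: Gs Prs => [|G Gs IH] [|pr Prs] //= [[-> _] /IH ->]. Qed.

Lemma rel2_cond n Gs Prs : rel2 n Gs Prs -> forall pr, pr \in Prs -> pcond pr.
Proof.
elim: Gs Prs => [|G Gs IH] [|pr Prs] //= [[_ [H1 _]] /IH H2] pr0.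
by rewrite inE => /orP [/eqP -> | /H2].
Qed.

Lemma good_flat n Y Gs Prs : rel2 n Gs Prs -> sorted ltn (flatten Gs) -> Hom P Gs ->
  (forall G, G \in Gs -> {subset G <= Y}) ->
  [/\ Good P n (flatten (map snd Prs)) Y,
      (forall F, F \in flatten (map snd Prs) -> exists2 G, G \in Gs & {subset F <= G}) &
      {subset flatten (flatten (map snd Prs)) <= flatten Gs}].
Proof.
elim: Gs Prs => [|G Gs IH] [|pr Prs] //= [[_ [_ [HF1 HF2 HF3]]] Hrel] Hs [HH1 HH2] HY.
have [[HI1 HI2 HI3] HI4 HI5] := IH Prs Hrel (sorted_catR Hs) HH2
  (fun G0 HG0 => HY G0 (mem_behead (s := G :: Gs) HG0)).
have HprG : {subset flatten pr.2 <= G}.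
  by move=> z /flattenP [F HF Hz]; have [_ _ H] := HF1 F HF; apply: H.
split.
- split.
  + move=> F; rewrite mem_cat => /orP [HF | HF]; last exact: HI1.
    have [H1 H2 H3] := HF1 F HF; split => // z /H3; apply: HY; exact: mem_head.
  + rewrite flatten_cat; exact: (sorted_sub2 Hs HprG HI5 HF2 HI2).
  + apply: Hom_cat => // F F' HF HF'.
    have [_ _ HFG] := HF1 F HF.
    have [G' HG' HF'G'] := HI4 F' HF'.
    move=> x x' y y' Hx Hx' Hy Hy'; apply: (HH1 G' HG'); by [apply: HFG | apply: HF'G'].
- move=> F; rewrite mem_cat => /orP [HF | HF].
    by exists G; [exact: mem_head | have [_ _ H] := HF1 F HF].
  by have [G' HG' H] := HI4 F HF; exists G' => //; rewrite inE HG' orbT.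
- move=> z; rewrite flatten_cat !mem_cat => /orP [/HprG -> // | /HI5 ->]; by rewrite orbT.
Qed.

Lemma main_ind k : forall n Y, Ex (n + 6 * k) Y -> sorted ltn Y -> {subset Y <= X} ->
  exists Fs, Good P n Fs Y /\ Ex k (map (last 0) Fs).
Proof.
elim: k => [|k IH] n Y HY Hs HYX.
  exists [:: Y]; split => //.
  split => //=; last by rewrite cats0.
  by move=> F; rewrite inE => /eqP ->; split => //; rewrite muln0 addn0 in HY.
rewrite (_ : n + 6 * k.+1 = (n + 6) + 6 * k) in HY; last by rewrite mulnS addnA.
have [Gs [[HG1 HG2 HG3] HGE]] := IH (n + 6) Y HY Hs HYX.
have [Prs Hrel] : exists Prs, rel2 n Gs Prs.
  apply: build => G HG; have [H1 H2 H3] := HG1 G HG; split => // z /H3; exact: HYX.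
have [[HJ1 HJ2 HJ3] _ _] := good_flat Hrel HG2 HG3 (fun G HG => let: And3 _ _ H := HG1 G HG in H).
have HGE' : Ex k (map fst Prs) by rewrite (rel2_fst Hrel).
have [Fs [Hsub HFE]] := comb HGE' (rel2_cond Hrel).
exists Fs; split => //; split.
- by move=> F HF; apply: HJ1; apply: (mem_subseq Hsub).
- exact: (subseq_sorted ltn_trans (subseq_flatten Hsub) HJ2).
- exact: Hom_subseq Hsub HJ3.
Qed.

End Main.

Lemma sorted_flatten_nth (Fs : seq (seq nat)) i j x y :
  sorted ltn (flatten Fs) -> i < j -> j < size Fs ->
  x \in nth [::] Fs i -> y \in nth [::] Fs j -> x < y.
Proof.
move=> Hs Hij Hj Hx Hy.
have Hi1 : nth [::] Fs i \in take j Fs.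
  rewrite -(nth_take _ Hij); apply: mem_nth; rewrite size_takel //; exact: ltnW.
have Hj1 : nth [::] Fs j \in drop j Fs.
  rewrite -[in nth _ Fs j](addn0 j) -nth_drop; apply: mem_nth; by rewrite size_drop subn_gt0.
rewrite -(cat_take_drop j Fs) flatten_cat in Hs.
apply: (sorted_cat_lt Hs); apply/flattenP; [exists (nth [::] Fs i) | exists (nth [::] Fs j)] => //.
Qed.

Lemma Hom_nth P (Fs : seq (seq nat)) i j : Hom P Fs -> i < j -> j < size Fs ->
  forall x x' y y', x \in nth [::] Fs i -> x' \in nth [::] Fs i ->
    y \in nth [::] Fs j -> y' \in nth [::] Fs j -> P x y = P x' y'.
Proof.
elim: Fs i j => [|F Fs IH] i j //= [H1 H2].
case: j => [|j] //; case: i => [|i] Hij Hj /=.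
  by move=> x x' y y' Hx Hx' Hy Hy'; apply: (H1 (nth [::] Fs j)) => //; apply: mem_nth.
exact: IH.
Qed.

Unset Implicit Arguments.

Theorem mainTheorem16 (n k : nat) (X : seq nat) :
  fin_set X ->
  large (opow (n + 6 * k)) X ->
  sparse (opow 3) X ->
  admits_grouping (opow n) (opow k) (head 0 X) X.
Proof.
move=> HX Hlarge Hsp P HPc.
have [p [r [HXe Hp]]] := large_Ex Hlarge.
have Hpn : p <> [::] by exact: Ex_nil Hp.
have HXn : X <> [::] by rewrite HXe; destruct p.
have Hc4 : 4 <= head 0 X by case: Hsp => H _; apply: H; apply: head_in.
have HcX : forall z, z \in X -> head 0 X <= z by move=> z; apply: sorted_head_min.
have HB := sparse_Bnd Hsp.
have Hps : sorted ltn p by move: HX; rewrite /fin_set HXe => /sorted_catL.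
have HpX : {subset p <= X} by move=> z Hz; rewrite HXe mem_cat Hz.
have [Fs [[HF1 HF2 HF3] HFE]] := main_ind Hc4 HcX HPc HB Hp Hps HpX.
exists Fs; split; [|split; [|split]].
- move=> i Hi; have Hin : nth [::] Fs i \in Fs by apply: mem_nth.
  have [H1 H2 H3] := HF1 _ Hin; split => //; split; first by move=> z /H3 /HpX.
  split; first by apply/eqP; exact: Ex_nil H1.
  exact: Ex_large.
- move=> i j /andP [Hij Hj].
  have Hi : i < size Fs by apply: ltn_trans Hj.
  have [Hi1 _ _] := HF1 _ (mem_nth [::] Hi).
  have [Hj1 _ _] := HF1 _ (mem_nth [::] Hj).
  apply: (sorted_flatten_nth HF2 Hij Hj); [apply: last_in; exact: Ex_nil Hi1 | apply: head_in; exact: Ex_nil Hj1].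
- exact: Ex_large.
- move=> i j /andP [Hij Hj]; exact: Hom_nth.
Qed.
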